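(* Let $T$ be a nondegenerate triangle in $\mathbb R^2$ whose vertices belong to $\mathbb Z^2$. Then for every $r\in\mathbb Z^2$, $r\neq0$, $$\sum_{i\in\mathbb Z^2}⨍_{(i,i+r)}\chi_T\,db=|T|.$$
   Context: A bond $(x_1,x_2)$ is the open segment $\{(1-\lambda)x_1+\lambda x_2:\lambda\in(0,1)\}$, and $⨍_{(x_1,x_2)}f\,db=\int_0^1f((1-\lambda)x_1+\lambda x_2)\,d\lambda$. For a polygonal set $\omega\subset\mathbb R^2$, $\chi_\omega(x)=\lim_{\rho\to0}\frac{|\omega\cap B_\rho(x)|}{|B_\rho(x)|}$, where $B_\rho(x)$ is the disc of radius $\rho$ centered at $x$; for a triangle $T$ this equals $1$ in the interior, $1/2$ on the relative interior of an edge, $\alpha/(2\pi)$ at a vertex with angle $\alpha$, and $0$ outside $\overline T$. $|T|$ is the area of $T$. *)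

(* Defs.v *)
From Stdlib Require Import Reals Lra ZArith List ClassicalEpsilon.
Open Scope R_scope.

Definition pt := (R * R)%type.

Definition ptZ (i : Z * Z) : pt := (IZR (fst i), IZR (snd i)).

Definition psub (x y : pt) : pt := (fst x - fst y, snd x - snd y).
Definition det2 (u v : pt) : R := fst u * snd v - snd u * fst v.
Definition dot2 (u v : pt) : R := fst u * fst v + snd u * snd v.
Definition norm2 (u : pt) : R := sqrt (dot2 u u).

Definition nondegenerate (a b c : pt) : Prop := det2 (psub b a) (psub c a) <> 0.

Definition tri_area (a b c : pt) : R := Rabs (det2 (psub b a) (psub c a)) / 2.

Definition vertex_angle (v p q : pt) : R :=
  acos (dot2 (psub p v) (psub q v) / (norm2 (psub p v) * norm2 (psub q v))).

Definition bary_b (a b c x : pt) : R :=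
  det2 (psub x a) (psub c a) / det2 (psub b a) (psub c a).
Definition bary_c (a b c x : pt) : R :=
  det2 (psub b a) (psub x a) / det2 (psub b a) (psub c a).
Definition bary_a (a b c x : pt) : R := 1 - bary_b a b c x - bary_c a b c x.

Definition decP (P : Prop) : bool :=
  if excluded_middle_informative P then true else false.

(* chi_T(x) = lim_{rho->0} |T ∩ B_rho(x)| / |B_rho(x)| for the triangle T = abc,
   written out as in the paper: 1 in the interior, 1/2 on the relative interior
   of an edge, alpha/(2 pi) at a vertex of angle alpha, 0 outside the closure. *)
Definition chi_tri (a b c : pt) (x : pt) : R :=
  if decP (x = a) then vertex_angle a b c / (2 * PI)
  else if decP (x = b) then vertex_angle b c a / (2 * PI)
  else if decP (x = c) then vertex_angle c a b / (2 * PI)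
  else
    let la := bary_a a b c x in
    let lb := bary_b a b c x in
    let lc := bary_c a b c x in
    if decP (0 < la /\ 0 < lb /\ 0 < lc) then 1
    else if decP (0 <= la /\ 0 <= lb /\ 0 <= lc) then 1 / 2
    else 0.

Definition bond_param (x1 x2 : pt) (f : pt -> R) (l : R) : R :=
  f ((1 - l) * fst x1 + l * fst x2, (1 - l) * snd x1 + l * snd x2).

(* ⨍_{(x1,x2)} f db = ∫_0^1 f((1-λ)x1+λx2) dλ  (Riemann integral; 0 if not integrable) *)
Definition bond_avg (f : pt -> R) (x1 x2 : pt) : R :=
  match excluded_middle_informative (inhabited (Riemann_integrable (bond_param x1 x2 f) 0 1)) with
  | left h => RiemannInt (epsilon h (fun _ => True))
  | right _ => 0
  end.

Fixpoint sum_list (t : Z * Z -> R) (F : list (Z * Z)) : R :=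
  match F with nil => 0 | i :: F' => t i + sum_list t F' end.

(* unconditional convergence of sum_{i in Z^2} t i to s *)
Definition sumZ2 (t : Z * Z -> R) (s : R) : Prop :=
  forall eps, 0 < eps -> exists F0 : list (Z * Z),
    forall F : list (Z * Z), NoDup F -> incl F0 F -> Rabs (sum_list t F - s) < eps.

(* Main.v *)
Require Import Defs.
From Stdlib Require Import Reals Lra Lia ZArith List Classical ClassicalEpsilon RList Permutation FunctionalExtensionality Znumtheory.
Open Scope R_scope.

Lemma adapted_h (h : R -> R) a b c : a <= b -> (forall x, a < x < b -> h x = c) ->
  adapted_couple h a b (cons a (cons b nil)) (cons c nil).
Proof.
  intros Hab Hh; unfold adapted_couple; repeat split.
  - unfold RList.ordered_Rlist; intros; simpl in H; inversion H;
      [ simpl; assumption | elim (Nat.nle_succ_0 _ H1) ].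
  - simpl; unfold Rmin; destruct (Rle_dec a b); lra.
  - simpl; unfold Rmax; destruct (Rle_dec a b); lra.
  - unfold constant_D_eq, open_interval; intros i Hi x Hx.
    destruct i as [|i]; [simpl in *; apply Hh; auto | simpl in Hi; lia].
Qed.

Lemma int_open_const (h : R -> R) a b c : a <= b -> (forall x, a < x < b -> h x = c) ->
  { pr : Riemann_integrable h a b | RiemannInt pr = c * (b - a) }.
Proof.
  intros Hab Hh.
  assert (pr : Riemann_integrable h a b).
  { intro eps.
    assert (Hs : IsStepFun h a b).
    { exists (cons a (cons b nil)). exists (cons c nil). apply adapted_h; auto. }
    exists (mkStepFun Hs). exists (mkStepFun (StepFun_P4 a b 0)). split.
    - intros t _. simpl. unfold fct_cte. rewrite Rminus_diag, Rabs_R0. lra.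
    - rewrite StepFun_P18, Rmult_0_l, Rabs_R0. apply cond_pos. }
  exists pr.
  rewrite (RiemannInt_P18 pr (RiemannInt_P14 a b c) Hab).
  - apply RiemannInt_P15.
  - intros; unfold fct_cte; auto.
Qed.

Lemma int_three (h : R -> R) u v c : 0 <= u -> u <= v -> v <= 1 ->
  (forall x, 0 < x < u -> h x = 0) -> (forall x, u < x < v -> h x = c) ->
  (forall x, v < x < 1 -> h x = 0) ->
  { pr : Riemann_integrable h 0 1 | RiemannInt pr = c * (v - u) }.
Proof.
  intros H0 H1 H2 Ha Hb Hc.
  destruct (int_open_const h 0 u 0 H0 Ha) as [p1 E1].
  destruct (int_open_const h u v c H1 Hb) as [p2 E2].
  destruct (int_open_const h v 1 0 H2 Hc) as [p3 E3].
  pose (p12 := RiemannInt_P24 p1 p2).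
  pose (p := RiemannInt_P24 p12 p3).
  exists p. rewrite <- (RiemannInt_P26 p12 p3 p), <- (RiemannInt_P26 p1 p2 p12). lra.
Qed.

Definition clamp01 (x : R) : R := Rmin (Rmax x 0) 1.

Lemma int_bump (h : R -> R) u v c : u <= v ->
  (forall x, x <> u -> x <> v -> h x = if Rlt_dec u x then if Rlt_dec x v then c else 0 else 0) ->
  { pr : Riemann_integrable h 0 1 | RiemannInt pr = c * (clamp01 v - clamp01 u) }.
Proof.
  intros Huv Hh. unfold clamp01.
  apply int_three.
  - unfold Rmin, Rmax; repeat destruct Rle_dec; lra.
  - unfold Rmin, Rmax; repeat destruct Rle_dec; lra.
  - unfold Rmin, Rmax; repeat destruct Rle_dec; lra.
  - intros x Hx. rewrite Hh; [| unfold Rmin,Rmax in Hx; repeat destruct Rle_dec; lra ..].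
    repeat destruct Rlt_dec; auto. unfold Rmin,Rmax in Hx; repeat destruct Rle_dec; lra.
  - intros x Hx. rewrite Hh; [| unfold Rmin,Rmax in Hx; repeat destruct Rle_dec; lra ..].
    repeat destruct Rlt_dec; auto; unfold Rmin,Rmax in Hx; repeat destruct Rle_dec; lra.
  - intros x Hx. rewrite Hh; [| unfold Rmin,Rmax in Hx; repeat destruct Rle_dec; lra ..].
    repeat destruct Rlt_dec; auto. unfold Rmin,Rmax in Hx; repeat destruct Rle_dec; lra.
Qed.

Definition clean (la lb lc : R) : R :=
  if decP (0 < la /\ 0 < lb /\ 0 < lc) then 1
  else if decP (0 <= la /\ 0 <= lb /\ 0 <= lc) then 1 / 2 else 0.

Lemma decP_true (P : Prop) : P -> decP P = true.
Proof. intros H; unfold decP; destruct excluded_middle_informative; tauto. Qed.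
Lemma decP_false (P : Prop) : ~ P -> decP P = false.
Proof. intros H; unfold decP; destruct excluded_middle_informative; tauto. Qed.

Lemma chi_else a b c x : x <> a -> x <> b -> x <> c ->
  chi_tri a b c x = clean (bary_a a b c x) (bary_b a b c x) (bary_c a b c x).
Proof.
  intros Ha Hb Hc. unfold chi_tri. rewrite !decP_false by auto. reflexivity.
Qed.

Definition Dt (A B C : pt) := det2 (psub B A) (psub C A).

Ltac dpt := repeat match goal with
  | p : pt |- _ => destruct p
  | p : (R*R)%type |- _ => destruct p end.

Ltac ub := unfold bary_a, bary_b, bary_c, Dt, det2, psub in *; simpl in *.

Lemma bary_sum A B C X : bary_a A B C X + bary_b A B C X + bary_c A B C X = 1.
Proof. unfold bary_a. ring. Qed.

Lemma bary_affine A B C x1 x2 y1 y2 th : Dt A B C <> 0 ->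
  (bary_a A B C ((1-th)*x1 + th*y1, (1-th)*x2+th*y2) =
     (1-th) * bary_a A B C (x1,x2) + th * bary_a A B C (y1,y2)) /\
  (bary_b A B C ((1-th)*x1 + th*y1, (1-th)*x2+th*y2) =
     (1-th) * bary_b A B C (x1,x2) + th * bary_b A B C (y1,y2)) /\
  (bary_c A B C ((1-th)*x1 + th*y1, (1-th)*x2+th*y2) =
     (1-th) * bary_c A B C (x1,x2) + th * bary_c A B C (y1,y2)).
Proof. intros HD. dpt. ub. repeat split; field; auto. Qed.

Lemma bary_coords A B C X : Dt A B C <> 0 ->
  bary_a A B C X * fst A + bary_b A B C X * fst B + bary_c A B C X * fst C = fst X /\
  bary_a A B C X * snd A + bary_b A B C X * snd B + bary_c A B C X * snd C = snd X.
Proof. intros HD. dpt. ub. split; field; auto. Qed.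

Lemma bary_vA A B C : Dt A B C <> 0 ->
  bary_a A B C A = 1 /\ bary_b A B C A = 0 /\ bary_c A B C A = 0.
Proof. intros HD. dpt. ub. repeat split; field; auto. Qed.
Lemma bary_vB A B C : Dt A B C <> 0 ->
  bary_a A B C B = 0 /\ bary_b A B C B = 1 /\ bary_c A B C B = 0.
Proof. intros HD. dpt. ub. repeat split; field; auto. Qed.
Lemma bary_vC A B C : Dt A B C <> 0 ->
  bary_a A B C C = 0 /\ bary_b A B C C = 0 /\ bary_c A B C C = 1.
Proof. intros HD. dpt. ub. repeat split; field; auto. Qed.

Definition Hf (A B C : pt) (f : pt -> R) : Prop :=
  forall X, X <> A -> X <> B -> X <> C ->
    f X = clean (bary_a A B C X) (bary_b A B C X) (bary_c A B C X).

Lemma notvert A B C X : Dt A B C <> 0 ->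
  ((bary_b A B C X <> 0 \/ bary_c A B C X <> 0) -> X <> A) /\
  ((bary_a A B C X <> 0 \/ bary_c A B C X <> 0) -> X <> B) /\
  ((bary_a A B C X <> 0 \/ bary_b A B C X <> 0) -> X <> C).
Proof.
  intros HD. destruct (bary_vA _ _ _ HD) as (?&?&?).
  destruct (bary_vB _ _ _ HD) as (?&?&?). destruct (bary_vC _ _ _ HD) as (?&?&?).
  repeat split; intros [HH|HH] E; subst X; lra.
Qed.

Lemma f_one A B C f X : Dt A B C <> 0 -> Hf A B C f ->
  0 < bary_a A B C X -> 0 < bary_b A B C X -> 0 < bary_c A B C X -> f X = 1.
Proof.
  intros HD Hh H1 H2 H3. destruct (notvert A B C X HD) as (N1&N2&N3).
  rewrite Hh by (apply N1 || apply N2 || apply N3; lra).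
  unfold clean. rewrite decP_true by auto. reflexivity.
Qed.

Lemma f_half A B C f X : Dt A B C <> 0 -> Hf A B C f ->
  0 <= bary_a A B C X -> 0 <= bary_b A B C X -> 0 <= bary_c A B C X ->
  (bary_a A B C X = 0 \/ bary_b A B C X = 0 \/ bary_c A B C X = 0) ->
  ((0 < bary_a A B C X /\ 0 < bary_b A B C X) \/ (0 < bary_a A B C X /\ 0 < bary_c A B C X)
    \/ (0 < bary_b A B C X /\ 0 < bary_c A B C X)) ->
  f X = 1/2.
Proof.
  intros HD Hh H1 H2 H3 Z P. destruct (notvert A B C X HD) as (N1&N2&N3).
  rewrite Hh by (apply N1 || apply N2 || apply N3; lra).
  unfold clean. rewrite decP_false by lra. rewrite decP_true by lra. reflexivity.
Qed.

Lemma f_zero A B C f X : Dt A B C <> 0 -> Hf A B C f ->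
  (bary_a A B C X < 0 \/ bary_b A B C X < 0 \/ bary_c A B C X < 0) -> f X = 0.
Proof.
  intros HD Hh Z. destruct (notvert A B C X HD) as (N1&N2&N3).
  destruct (bary_vA _ _ _ HD) as (?&?&?).
  destruct (bary_vB _ _ _ HD) as (?&?&?). destruct (bary_vC _ _ _ HD) as (?&?&?).
  assert (X <> A) by (intro; subst; lra). assert (X <> B) by (intro; subst; lra).
  assert (X <> C) by (intro; subst; lra).
  rewrite Hh by auto.
  unfold clean. rewrite !decP_false by lra. reflexivity.
Qed.

Definition bump (u v c t : R) : R :=
  if Rlt_dec u t then if Rlt_dec t v then c else 0 else 0.

Definition RowProp (f : pt -> R) (n u v c : R) : Prop :=
  u <= v /\ forall t, t <> u -> t <> v -> f (t, n) = bump u v c t.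

Lemma row_param f n x1 x2 c : x1 <> x2 ->
  (forall th, 0 < th < 1 -> f ((1-th)*x1+th*x2, (1-th)*n+th*n) = c) ->
  (forall th, th < 0 \/ 1 < th -> f ((1-th)*x1+th*x2, (1-th)*n+th*n) = 0) ->
  RowProp f n (Rmin x1 x2) (Rmax x1 x2) c.
Proof.
  intros Hx Hin Hout. split; [unfold Rmin, Rmax; destruct Rle_dec; lra|].
  intros t Hu Hv.
  set (th := (t - x1) / (x2 - x1)).
  assert (E : (t, n) = ((1-th)*x1+th*x2, (1-th)*n+th*n)).
  { unfold th. f_equal; field; lra. }
  assert (Ht : t = x1 + th * (x2 - x1)) by (unfold th; field; lra).
  rewrite E. unfold bump, Rmin, Rmax in *.
  destruct (Rle_dec x1 x2).
  - assert (x1 < x2) by lra.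
    destruct (Rlt_dec x1 t); destruct (Rlt_dec t x2).
    + apply Hin. split; nra.
    + apply Hout. right. nra.
    + apply Hout. left. nra.
    + lra.
  - destruct (Rlt_dec x2 t); destruct (Rlt_dec t x1).
    + apply Hin. split; nra.
    + apply Hout. left. nra.
    + apply Hout. right. nra.
    + lra.
Qed.

Lemma combo_pos p q th : 0 <= p -> 0 <= q -> 0 < p + q -> 0 < th < 1 -> 0 < (1-th)*p + th*q.
Proof. intros. destruct (Rlt_dec 0 p); nra. Qed.
Lemma combo_nn p q th : 0 <= p -> 0 <= q -> 0 < th < 1 -> 0 <= (1-th)*p + th*q.
Proof. intros. nra. Qed.

Lemma seg_one A B C f n x1 x2 pa pb pc qa qb qc :
  Dt A B C <> 0 -> Hf A B C f ->
  bary_a A B C (x1,n) = pa -> bary_b A B C (x1,n) = pb -> bary_c A B C (x1,n) = pc ->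
  bary_a A B C (x2,n) = qa -> bary_b A B C (x2,n) = qb -> bary_c A B C (x2,n) = qc ->
  0 <= pa -> 0 <= pb -> 0 <= pc -> 0 <= qa -> 0 <= qb -> 0 <= qc ->
  0 < pa + qa -> 0 < pb + qb -> 0 < pc + qc ->
  ((0 < pa /\ qa = 0) \/ (0 < pb /\ qb = 0) \/ (0 < pc /\ qc = 0)) ->
  ((0 < qa /\ pa = 0) \/ (0 < qb /\ pb = 0) \/ (0 < qc /\ pc = 0)) ->
  (forall th, 0 < th < 1 -> f ((1-th)*x1+th*x2, (1-th)*n+th*n) = 1) /\
  (forall th, th < 0 \/ 1 < th -> f ((1-th)*x1+th*x2, (1-th)*n+th*n) = 0).
Proof.
  intros HD Hh E1 E2 E3 E4 E5 E6 P1 P2 P3 Q1 Q2 Q3 S1 S2 S3 J K.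
  split; intros th Hth;
  destruct (bary_affine A B C x1 n x2 n th HD) as (Fa&Fb&Fc).
  - apply (f_one A B C); auto; [rewrite Fa | rewrite Fb | rewrite Fc]; subst;
      apply combo_pos; auto.
  - apply (f_zero A B C); auto. rewrite Fa, Fb, Fc. subst.
    destruct Hth as [Hth|Hth].
    + destruct K as [(?&?)|[(?&?)|(?&?)]]; [left|right;left|right;right]; rewrite H0; nra.
    + destruct J as [(?&?)|[(?&?)|(?&?)]]; [left|right;left|right;right]; rewrite H0; nra.
Qed.

Lemma seg_half A B C f n x1 x2 pa pb pc qa qb qc :
  Dt A B C <> 0 -> Hf A B C f ->
  bary_a A B C (x1,n) = pa -> bary_b A B C (x1,n) = pb -> bary_c A B C (x1,n) = pc ->
  bary_a A B C (x2,n) = qa -> bary_b A B C (x2,n) = qb -> bary_c A B C (x2,n) = qc ->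
  0 <= pa -> 0 <= pb -> 0 <= pc -> 0 <= qa -> 0 <= qb -> 0 <= qc ->
  ((pa = 0 /\ qa = 0 /\ 0 < pb + qb /\ 0 < pc + qc) \/
   (pb = 0 /\ qb = 0 /\ 0 < pa + qa /\ 0 < pc + qc) \/
   (pc = 0 /\ qc = 0 /\ 0 < pa + qa /\ 0 < pb + qb)) ->
  ((0 < pa /\ qa = 0) \/ (0 < pb /\ qb = 0) \/ (0 < pc /\ qc = 0)) ->
  ((0 < qa /\ pa = 0) \/ (0 < qb /\ pb = 0) \/ (0 < qc /\ pc = 0)) ->
  (forall th, 0 < th < 1 -> f ((1-th)*x1+th*x2, (1-th)*n+th*n) = 1/2) /\
  (forall th, th < 0 \/ 1 < th -> f ((1-th)*x1+th*x2, (1-th)*n+th*n) = 0).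
Proof.
  intros HD Hh E1 E2 E3 E4 E5 E6 P1 P2 P3 Q1 Q2 Q3 Z J K.
  split; intros th Hth;
  destruct (bary_affine A B C x1 n x2 n th HD) as (Fa&Fb&Fc).
  - apply (f_half A B C); auto; rewrite ?Fa, ?Fb, ?Fc; rewrite ?E1,?E2,?E3,?E4,?E5,?E6;
      try (apply combo_nn; auto).
    + destruct Z as [(Z1&Z2&?&?)|[(Z1&Z2&?&?)|(Z1&Z2&?&?)]]; rewrite Z1, Z2;
        [left|right;left|right;right]; ring.
    + destruct Z as [(?&?&?&?)|[(?&?&?&?)|(?&?&?&?)]];
        [right;right|right;left|left]; split; apply combo_pos; auto.
  - apply (f_zero A B C); auto. rewrite Fa, Fb, Fc. subst.
    destruct Hth as [Hth|Hth].
    + destruct K as [(?&?)|[(?&?)|(?&?)]]; [left|right;left|right;right]; rewrite H0; nra.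
    + destruct J as [(?&?)|[(?&?)|(?&?)]]; [left|right;left|right;right]; rewrite H0; nra.
Qed.

Definition rowlen (xa ya xb yb xc yc n : R) : R :=
  let D := Rabs (Dt (xa,ya) (xb,yb) (xc,yc)) in
  if Rlt_dec n ya then 0 else if Rlt_dec yc n then 0 else
  if Req_EM_T n ya then (if Req_EM_T ya yb then D/(yc-ya)/2 else 0) else
  if Req_EM_T n yc then (if Req_EM_T yb yc then D/(yc-ya)/2 else 0) else
  if Rlt_dec n yb then D*(n-ya)/((yb-ya)*(yc-ya)) else D*(yc-n)/((yc-yb)*(yc-ya)).

Lemma row_zero f n u : (forall t, t <> u -> f (t, n) = 0) -> RowProp f n u u 0.
Proof.
  intros H. split; [lra|]. intros t Hu _. rewrite H by auto. unfold bump.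
  repeat destruct Rlt_dec; auto.
Qed.

Lemma some_neg a b c : ~ (0 <= a /\ 0 <= b /\ 0 <= c) -> a < 0 \/ b < 0 \/ c < 0.
Proof. intros H. destruct (Rlt_or_le a 0); destruct (Rlt_or_le b 0); destruct (Rlt_or_le c 0); tauto. Qed.

Lemma Rabs_le_inv' x y : Rabs x <= y -> -y <= x <= y.
Proof. unfold Rabs; destruct Rcase_abs; lra. Qed.

Lemma conv_bound Bd p q m : 0 <= m <= 1 -> Rabs p <= Bd -> Rabs q <= Bd ->
  -Bd <= (1-m)*p + m*q <= Bd.
Proof.
  intros Hm Hp Hq. apply Rabs_le_inv' in Hp. apply Rabs_le_inv' in Hq. split; nra.
Qed.

Section Row.
Variables xa ya xb yb xc yc Bd : R.
Let A := (xa, ya). Let B := (xb, yb). Let C := (xc, yc).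
Hypothesis HD : Dt A B C <> 0.
Hypothesis Hab : ya <= yb.
Hypothesis Hbc : yb <= yc.
Hypothesis Ba : Rabs xa <= Bd.
Hypothesis Bb : Rabs xb <= Bd.
Hypothesis Bc : Rabs xc <= Bd.

Lemma Dexp : Dt A B C = (xb-xa)*(yc-ya) - (yb-ya)*(xc-xa).
Proof. unfold Dt, det2, psub, A, B, C; simpl; ring. Qed.

Lemma yac : ya < yc.
Proof. destruct (Req_dec ya yc); [|lra]. exfalso; apply HD. rewrite Dexp.
  replace yb with ya by lra. subst. ring. Qed.

Lemma ids X : let ba := bary_a A B C X in let bb := bary_b A B C X in
  let bc := bary_c A B C X in
  ba + bb + bc = 1 /\ ba * xa + bb * xb + bc * xc = fst X /\ ba * ya + bb * yb + bc * yc = snd X.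
Proof.
  intros. destruct (bary_coords A B C X HD). split; [apply bary_sum|]. split; auto.
Qed.

Lemma bary_on_AB m : 
  bary_a A B C ((1-m)*xa + m*xb, (1-m)*ya+m*yb) = 1 - m /\
  bary_b A B C ((1-m)*xa + m*xb, (1-m)*ya+m*yb) = m /\
  bary_c A B C ((1-m)*xa + m*xb, (1-m)*ya+m*yb) = 0.
Proof.
  destruct (bary_affine A B C xa ya xb yb m HD) as (E1&E2&E3).
  destruct (bary_vA A B C HD) as (a1&a2&a3). destruct (bary_vB A B C HD) as (b1&b2&b3).
  unfold A, B in *. rewrite E1, E2, E3, a1,a2,a3,b1,b2,b3. repeat split; ring.
Qed.
Lemma bary_on_AC m : 
  bary_a A B C ((1-m)*xa + m*xc, (1-m)*ya+m*yc) = 1 - m /\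
  bary_b A B C ((1-m)*xa + m*xc, (1-m)*ya+m*yc) = 0 /\
  bary_c A B C ((1-m)*xa + m*xc, (1-m)*ya+m*yc) = m.
Proof.
  destruct (bary_affine A B C xa ya xc yc m HD) as (E1&E2&E3).
  destruct (bary_vA A B C HD) as (a1&a2&a3). destruct (bary_vC A B C HD) as (b1&b2&b3).
  unfold A, C in *. rewrite E1, E2, E3, a1,a2,a3,b1,b2,b3. repeat split; ring.
Qed.
Lemma bary_on_BC m : 
  bary_a A B C ((1-m)*xb + m*xc, (1-m)*yb+m*yc) = 0 /\
  bary_b A B C ((1-m)*xb + m*xc, (1-m)*yb+m*yc) = 1 - m /\
  bary_c A B C ((1-m)*xb + m*xc, (1-m)*yb+m*yc) = m.
Proof.
  destruct (bary_affine A B C xb yb xc yc m HD) as (E1&E2&E3).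
  destruct (bary_vB A B C HD) as (a1&a2&a3). destruct (bary_vC A B C HD) as (b1&b2&b3).
  unfold B, C in *. rewrite E1, E2, E3, a1,a2,a3,b1,b2,b3. repeat split; ring.
Qed.


Lemma row_lemma f n : Hf A B C f -> exists u v c, RowProp f n u v c /\
  c*(v-u) = rowlen xa ya xb yb xc yc n /\ -Bd <= u /\ v <= Bd.
Proof.
  intros Hh. pose proof yac as Hac. pose proof Dexp as DE.
  assert (DE' : Dt (xa, ya) (xb, yb) (xc, yc) = (xb-xa)*(yc-ya) - (yb-ya)*(xc-xa)) by exact DE.
  assert (Bxa := Rabs_le_inv' _ _ Ba). assert (Bxb := Rabs_le_inv' _ _ Bb).
  assert (Bxc := Rabs_le_inv' _ _ Bc).
  unfold rowlen.
  destruct (Rlt_dec n ya) as [L1|L1].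
  { exists xa, xa, 0. split; [|split; [ring|lra]].
    apply row_zero. intros t Ht. apply (f_zero A B C); auto. apply some_neg.
    intros (P1&P2&P3). destruct (ids (t,n)) as (I1&I2&I3). simpl in *. nra. }
  destruct (Rlt_dec yc n) as [L2|L2].
  { exists xa, xa, 0. split; [|split; [ring|lra]].
    apply row_zero. intros t Ht. apply (f_zero A B C); auto. apply some_neg.
    intros (P1&P2&P3). destruct (ids (t,n)) as (I1&I2&I3). simpl in *. nra. }
  destruct (Req_EM_T n ya) as [E1|E1].
  { subst n. destruct (Req_EM_T ya yb) as [E2|E2].
    -
      assert (Hx : xa <> xb).
      { intro. apply HD. rewrite DE. subst. ring. }
      exists (Rmin xa xb), (Rmax xa xb), (1/2). split.
      + destruct (bary_vA A B C HD) as (a1&a2&a3). destruct (bary_vB A B C HD) as (b1&b2&b3).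
        assert (EB : (xb, ya) = B) by (unfold B; rewrite E2; auto).
        assert (b1' : bary_a A B C (xb,ya) = 0) by (rewrite EB; exact b1).
        assert (b2' : bary_b A B C (xb,ya) = 1) by (rewrite EB; exact b2).
        assert (b3' : bary_c A B C (xb,ya) = 0) by (rewrite EB; exact b3).
        destruct (seg_half A B C f ya xa xb 1 0 0 0 1 0) as [Hin Hout]; auto; try lra.
        apply row_param; auto.
      + split.
        * rewrite DE'. replace yb with ya by auto.
          replace ((xb - xa) * (yc - ya) - (ya - ya) * (xc - xa)) with ((xb-xa)*(yc-ya)) by ring.
          rewrite Rabs_mult, (Rabs_pos_eq (yc-ya)) by lra.
          unfold Rmin, Rmax; destruct Rle_dec; [rewrite Rabs_pos_eq by lra|rewrite Rabs_left by lra];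
          field; lra.
        * unfold Rmin, Rmax; destruct Rle_dec; lra.
    - exists xa, xa, 0. split; [|split; [ring|lra]].
      apply row_zero. intros t Ht. apply (f_zero A B C); auto. apply some_neg.
      intros (P1&P2&P3). destruct (ids (t,ya)) as (I1&I2&I3). simpl in *.
      assert (bary_b A B C (t, ya) = 0 /\ bary_c A B C (t, ya) = 0) as [Z1 Z2] by (split; nra).
      apply Ht. rewrite Z1, Z2 in *. nra. }
  destruct (Req_EM_T n yc) as [E3|E3].
  { subst n. destruct (Req_EM_T yb yc) as [E2|E2].
    - assert (Hx : xb <> xc).
      { intro. apply HD. rewrite DE. subst. ring. }
      exists (Rmin xb xc), (Rmax xb xc), (1/2). split.
      + destruct (bary_vB A B C HD) as (a1&a2&a3). destruct (bary_vC A B C HD) as (b1&b2&b3).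
        assert (EB : (xb, yc) = B) by (unfold B; rewrite E2; auto).
        assert (a1' : bary_a A B C (xb,yc) = 0) by (rewrite EB; exact a1).
        assert (a2' : bary_b A B C (xb,yc) = 1) by (rewrite EB; exact a2).
        assert (a3' : bary_c A B C (xb,yc) = 0) by (rewrite EB; exact a3).
        destruct (seg_half A B C f yc xb xc 0 1 0 0 0 1) as [Hin Hout]; auto; try lra.
        apply row_param; auto.
      + split.
        * rewrite DE'. replace yb with yc by auto.
          replace ((xb - xa) * (yc - ya) - (yc - ya) * (xc - xa)) with ((xb-xc)*(yc-ya)) by ring.
          rewrite Rabs_mult, (Rabs_pos_eq (yc-ya)) by lra.
          unfold Rmin, Rmax; destruct Rle_dec; [rewrite Rabs_left1 by lra|rewrite Rabs_pos_eq by lra];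
          field; lra.
        * unfold Rmin, Rmax; destruct Rle_dec; lra.
    - exists xc, xc, 0. split; [|split; [ring|lra]].
      apply row_zero. intros t Ht. apply (f_zero A B C); auto. apply some_neg.
      intros (P1&P2&P3). destruct (ids (t,yc)) as (I1&I2&I3). simpl in *.
      assert (bary_a A B C (t, yc) = 0 /\ bary_b A B C (t, yc) = 0) as [Z1 Z2] by (split; nra).
      apply Ht. rewrite Z1, Z2 in *. nra. }
  assert (Hn1 : ya < n) by lra. assert (Hn2 : n < yc) by lra.
  set (m2 := (n - ya) / (yc - ya)).
  assert (Hm2 : 0 < m2 < 1).
  { unfold m2; split; [apply Rdiv_lt_0_compat; lra|].
    apply Rmult_lt_reg_r with (yc - ya); [lra|]. unfold Rdiv; rewrite Rmult_assoc, Rinv_l; lra. }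
  set (x2 := (1-m2)*xa + m2*xc).
  assert (P2 : (x2, n) = ((1-m2)*xa + m2*xc, (1-m2)*ya+m2*yc)).
  { unfold x2; f_equal. unfold m2; field; lra. }
  destruct (bary_on_AC m2) as (q1&q2&q3). rewrite <- P2 in q1, q2, q3.
  destruct (Rlt_dec n yb) as [L3|L3].
  - set (m1 := (n - ya) / (yb - ya)).
    assert (Hm1 : 0 < m1 < 1).
    { unfold m1; split; [apply Rdiv_lt_0_compat; lra|].
      apply Rmult_lt_reg_r with (yb - ya); [lra|]. unfold Rdiv; rewrite Rmult_assoc, Rinv_l; lra. }
    set (x1 := (1-m1)*xa + m1*xb).
    assert (P1 : (x1, n) = ((1-m1)*xa + m1*xb, (1-m1)*ya+m1*yb)).
    { unfold x1; f_equal. unfold m1; field; lra. }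
    destruct (bary_on_AB m1) as (p1&p2&p3). rewrite <- P1 in p1, p2, p3.
    assert (Ex : x1 - x2 = (n - ya) * Dt A B C / ((yb-ya)*(yc-ya))).
    { rewrite DE. unfold x1, x2, m1, m2. field. lra. }
    assert (Hx : x1 <> x2).
    { intro E. assert (x1 - x2 = 0) by lra. rewrite Ex in H. unfold Rdiv in H.
      apply Rmult_integral in H. destruct H as [H|H].
      - apply Rmult_integral in H. destruct H; [lra|auto].
      - apply Rinv_neq_0_compat in H; auto. apply Rmult_integral_contrapositive; split; lra. }
    exists (Rmin x1 x2), (Rmax x1 x2), 1. split.
    + destruct (seg_one A B C f n x1 x2 (1-m1) m1 0 (1-m2) 0 m2) as [Hin Hout]; auto; try lra.
      apply row_param; auto.
    + split.
      * replace (1 * (Rmax x1 x2 - Rmin x1 x2)) with (Rabs (x1 - x2)).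
        2:{ unfold Rmin, Rmax; destruct Rle_dec; [rewrite Rabs_left1 by lra|rewrite Rabs_pos_eq by lra]; ring. }
        rewrite Ex. unfold Rdiv. rewrite !Rabs_mult, Rabs_inv, Rabs_mult.
        rewrite (Rabs_pos_eq (n - ya)), (Rabs_pos_eq (yb - ya)), (Rabs_pos_eq (yc - ya)) by lra.
        unfold A, B, C. field. lra.
      * assert (-Bd <= x1 <= Bd) by (apply conv_bound; auto; lra).
        assert (-Bd <= x2 <= Bd) by (apply conv_bound; auto; lra).
        unfold Rmin, Rmax; destruct Rle_dec; lra.
  - assert (Hbc' : yb < yc) by lra.
    set (m1 := (n - yb) / (yc - yb)).
    assert (Hm1 : 0 <= m1 < 1).
    { unfold m1; split; [apply Rmult_le_pos; [lra|left; apply Rinv_0_lt_compat; lra]|].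
      apply Rmult_lt_reg_r with (yc - yb); [lra|]. unfold Rdiv; rewrite Rmult_assoc, Rinv_l; lra. }
    set (x1 := (1-m1)*xb + m1*xc).
    assert (P1 : (x1, n) = ((1-m1)*xb + m1*xc, (1-m1)*yb+m1*yc)).
    { unfold x1; f_equal. unfold m1; field; lra. }
    destruct (bary_on_BC m1) as (p1&p2&p3). rewrite <- P1 in p1, p2, p3.
    assert (Ex : x1 - x2 = (yc - n) * Dt A B C / ((yc-yb)*(yc-ya))).
    { rewrite DE. unfold x1, x2, m1, m2. field. lra. }
    assert (Hx : x1 <> x2).
    { intro E. assert (x1 - x2 = 0) by lra. rewrite Ex in H. unfold Rdiv in H.
      apply Rmult_integral in H. destruct H as [H|H].
      - apply Rmult_integral in H. destruct H; [lra|auto].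
      - apply Rinv_neq_0_compat in H; auto. apply Rmult_integral_contrapositive; split; lra. }
    exists (Rmin x1 x2), (Rmax x1 x2), 1. split.
    + destruct (seg_one A B C f n x1 x2 0 (1-m1) m1 (1-m2) 0 m2) as [Hin Hout]; auto; try lra.
      apply row_param; auto.
    + split.
      * replace (1 * (Rmax x1 x2 - Rmin x1 x2)) with (Rabs (x1 - x2)).
        2:{ unfold Rmin, Rmax; destruct Rle_dec; [rewrite Rabs_left1 by lra|rewrite Rabs_pos_eq by lra]; ring. }
        rewrite Ex. unfold Rdiv. rewrite !Rabs_mult, Rabs_inv, Rabs_mult.
        rewrite (Rabs_pos_eq (yc - n)), (Rabs_pos_eq (yc - yb)), (Rabs_pos_eq (yc - ya)) by lra.
        unfold A, B, C. field. lra.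
      * assert (-Bd <= x1 <= Bd) by (apply conv_bound; auto; lra).
        assert (-Bd <= x2 <= Bd) by (apply conv_bound; auto; lra).
        unfold Rmin, Rmax; destruct Rle_dec; lra.
Qed.

End Row.

Fixpoint sumR (f : nat -> R) (k : nat) : R :=
  match k with O => 0 | S k => sumR f k + f k end.

Definition sumZr (F : Z -> R) (lo : Z) (k : nat) : R :=
  sumR (fun j => F (lo + Z.of_nat j)%Z) k.

Lemma sumR_ext f g k : (forall j, (j < k)%nat -> f j = g j) -> sumR f k = sumR g k.
Proof. induction k; intros H; simpl; auto. rewrite IHk; [rewrite H by lia; auto|intros; apply H; lia]. Qed.

Lemma sumR_plus f g k : sumR (fun j => f j + g j) k = sumR f k + sumR g k.
Proof. induction k; simpl; lra. Qed.

Lemma sumR_scal c f k : sumR (fun j => c * f j) k = c * sumR f k.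
Proof. induction k; simpl; lra. Qed.

Lemma sumR_zero k : sumR (fun _ => 0) k = 0.
Proof. induction k; simpl; lra. Qed.

Lemma sumZr_tele F Phi lo k : (forall n, F n = Phi (n+1)%Z - Phi n) ->
  sumZr F lo k = Phi (lo + Z.of_nat k)%Z - Phi lo.
Proof.
  intros H. unfold sumZr. induction k; simpl.
  - replace (lo + 0)%Z with lo by lia. lra.
  - rewrite IHk, H. replace (lo + Z.of_nat k + 1)%Z with (lo + Z.pos (Pos.of_succ_nat k))%Z by lia.
    lra.
Qed.

Definition Lf (al be x : R) := al + be * x.

Definition piece (p q : Z) (al be : R) (n : Z) : R :=
  if orb (n <? p)%Z (q <? n)%Z then 0
  else if orb (n =? p)%Z (n =? q)%Z then Lf al be (IZR n) / 2 else Lf al be (IZR n).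

Definition Phip (p q : Z) (al be : R) (n : Z) : R :=
  if (n <=? p)%Z then 0
  else if (n <=? q)%Z then (IZR n - IZR p) * (Lf al be (IZR p) + Lf al be (IZR n)) / 2 - Lf al be (IZR n) / 2
  else (IZR q - IZR p) * (Lf al be (IZR p) + Lf al be (IZR q)) / 2.

Lemma piece_tele p q al be n : (p < q)%Z ->
  piece p q al be n = Phip p q al be (n+1) - Phip p q al be n.
Proof.
  intros Hpq. unfold piece, Phip, Lf.
  destruct (Z.ltb_spec n p); destruct (Z.ltb_spec q n); simpl;
  destruct (Z.eqb_spec n p); destruct (Z.eqb_spec n q); simpl;
  destruct (Z.leb_spec (n+1) p); destruct (Z.leb_spec n p);
  destruct (Z.leb_spec (n+1) q); destruct (Z.leb_spec n q);
  try (exfalso; lia); rewrite ?plus_IZR;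
  try (subst; field);
  try (assert (n = q - 1)%Z as -> by lia; rewrite minus_IZR; field);
  try field.
Qed.

Lemma piece_sum p q al be lo k : (p < q)%Z -> (lo <= p)%Z -> (q < lo + Z.of_nat k)%Z ->
  sumZr (piece p q al be) lo k = (IZR q - IZR p) * (Lf al be (IZR p) + Lf al be (IZR q)) / 2.
Proof.
  intros H1 H2 H3. rewrite (sumZr_tele _ (Phip p q al be)) by (intros; apply piece_tele; auto).
  unfold Phip. destruct (Z.leb_spec (lo + Z.of_nat k) p); [lia|].
  destruct (Z.leb_spec (lo + Z.of_nat k) q); [lia|].
  destruct (Z.leb_spec lo p); [|lia]. lra.
Qed.

Ltac izr := repeat match goal with
  | H : IZR _ < IZR _ |- _ => apply lt_IZR in H
  | H : ~ (IZR _ < IZR _) |- _ => apply Rnot_lt_le in H; apply le_IZR in H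
  | H : IZR _ = IZR _ |- _ => apply eq_IZR in H
  | H : IZR ?x <> IZR ?y |- _ => assert (x <> y)%Z by (intro; subst; auto); clear H
  end.

Section Tent.
Variables (xa xb xc : R) (a0 b0 c0 : Z).
Let ya := IZR a0. Let yb := IZR b0. Let yc := IZR c0.
Hypothesis Hab : (a0 <= b0)%Z.
Hypothesis Hbc : (b0 <= c0)%Z.
Hypothesis Hac : (a0 < c0)%Z.
Let h := Rabs (Dt (xa,ya) (xb,yb) (xc,yc)) / (yc - ya).

Definition T1 n := if (a0 =? b0)%Z then 0 else piece a0 b0 (- h * ya / (yb - ya)) (h / (yb - ya)) n.
Definition T2 n := if (b0 =? c0)%Z then 0 else piece b0 c0 (h * yc / (yc - yb)) (- h / (yc - yb)) n.

Ltac zdec := repeat match goal with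
 | |- context [(?x <? ?y)%Z] => destruct (Z.ltb_spec x y); try (exfalso; lia)
 | |- context [(?x =? ?y)%Z] => destruct (Z.eqb_spec x y); try (exfalso; lia)
 end; simpl.

Lemma rowlen_split n : rowlen xa ya xb yb xc yc (IZR n) = T1 n + T2 n.
Proof.
  assert (Hca : IZR c0 - IZR a0 <> 0).
  { intros HH2. apply Rminus_diag_uniq in HH2. apply eq_IZR in HH2. lia. }
  assert (Hba : b0 <> a0 -> IZR b0 - IZR a0 <> 0).
  { intros HH HH2. apply Rminus_diag_uniq in HH2. apply eq_IZR in HH2. lia. }
  assert (Hcb : c0 <> b0 -> IZR c0 - IZR b0 <> 0).
  { intros HH HH2. apply Rminus_diag_uniq in HH2. apply eq_IZR in HH2. lia. }
  unfold rowlen, T1, T2, piece, Lf. fold h. unfold h, ya, yb, yc in *.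
  destruct (Rlt_dec (IZR n) (IZR a0)); izr; [zdec; lra|].
  destruct (Rlt_dec (IZR c0) (IZR n)); izr; [zdec; lra|].
  destruct (Req_EM_T (IZR n) (IZR a0)); izr.
  { subst n. destruct (Req_EM_T (IZR a0) (IZR b0)); izr; zdec; try subst;
    try (field; repeat split; auto; try (apply Hba; lia); try (apply Hcb; lia)). }
  destruct (Req_EM_T (IZR n) (IZR c0)); izr.
  { subst n. destruct (Req_EM_T (IZR b0) (IZR c0)); izr; zdec; try subst;
    try (field; repeat split; auto; try (apply Hba; lia); try (apply Hcb; lia)). }
  destruct (Rlt_dec (IZR n) (IZR b0)); izr; zdec; try subst;
    try (field; repeat split; auto; try (apply Hba; lia); try (apply Hcb; lia)).
Qed.

Lemma sumT1 lo k : (lo <= a0)%Z -> (c0 < lo + Z.of_nat k)%Z ->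
  sumZr T1 lo k = h * (yb - ya) / 2.
Proof.
  intros H1 H2. unfold sumZr, T1. destruct (Z.eqb_spec a0 b0).
  - rewrite sumR_zero. unfold ya, yb. subst. lra.
  - fold (sumZr (piece a0 b0 (- h * ya / (yb - ya)) (h / (yb - ya))) lo k).
    rewrite piece_sum by lia. unfold Lf. fold ya yb.
    assert (yb - ya <> 0).
    { unfold ya, yb. intros HH2. apply Rminus_diag_uniq in HH2. apply eq_IZR in HH2. lia. }
    field. auto.
Qed.

Lemma sumT2 lo k : (lo <= a0)%Z -> (c0 < lo + Z.of_nat k)%Z ->
  sumZr T2 lo k = h * (yc - yb) / 2.
Proof.
  intros H1 H2. unfold sumZr, T2. destruct (Z.eqb_spec b0 c0).
  - rewrite sumR_zero. unfold yc, yb. subst. lra.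
  - fold (sumZr (piece b0 c0 (h * yc / (yc - yb)) (- h / (yc - yb))) lo k).
    rewrite piece_sum by lia. unfold Lf. fold yc yb.
    assert (yc - yb <> 0).
    { unfold yc, yb. intros HH2. apply Rminus_diag_uniq in HH2. apply eq_IZR in HH2. lia. }
    field. auto.
Qed.

Lemma tent_sum lo k : (lo <= a0)%Z -> (c0 < lo + Z.of_nat k)%Z ->
  sumZr (fun n => rowlen xa ya xb yb xc yc (IZR n)) lo k =
  Rabs (Dt (xa,ya) (xb,yb) (xc,yc)) / 2.
Proof.
  intros H1 H2. unfold sumZr.
  rewrite (sumR_ext _ (fun j => T1 (lo + Z.of_nat j)%Z + T2 (lo + Z.of_nat j)%Z))
    by (intros; apply rowlen_split).
  rewrite sumR_plus. fold (sumZr T1 lo k). fold (sumZr T2 lo k).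
  rewrite sumT1, sumT2 by auto. unfold h.
  assert (yc - ya <> 0).
  { unfold yc, ya. intros HH2. apply Rminus_diag_uniq in HH2. apply eq_IZR in HH2. lia. }
  field. auto.
Qed.
End Tent.

Definition avg01 (h : R -> R) : R :=
  match excluded_middle_informative (inhabited (Riemann_integrable h 0 1)) with
  | left H => RiemannInt (epsilon H (fun _ => True))
  | right _ => 0
  end.

Lemma avg01_val h (pr : Riemann_integrable h 0 1) : avg01 h = RiemannInt pr.
Proof.
  unfold avg01. destruct excluded_middle_informative as [H|H].
  - apply RiemannInt_P5.
  - exfalso; apply H; constructor; auto.
Qed.

Lemma clamp_mul g w : 0 < g -> g * clamp01 (w / g) = Rmin (Rmax w 0) g.
Proof.
  intros Hg. assert (Ew : w = g * (w / g)) by (field; lra).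
  set (z := w / g) in *. rewrite Ew. unfold clamp01, Rmin, Rmax.
  repeat destruct Rle_dec; nra.
Qed.

Definition Qc (u v s : R) := Rmin (Rmax s u) v.

Lemma bond_formula u v c g m : 0 < g -> u <= v ->
  c * (clamp01 ((v - m)/g) - clamp01 ((u - m)/g)) = c * (Qc u v (m + g) - Qc u v m) / g.
Proof.
  intros Hg Huv.
  assert (E : clamp01 ((v - m)/g) - clamp01 ((u - m)/g) = (Qc u v (m + g) - Qc u v m) / g).
  { apply Rmult_eq_reg_l with g; [|lra].
    rewrite Rmult_minus_distr_l, !clamp_mul by auto.
    unfold Qc, Rmin, Rmax. field_simplify; [|lra].
    repeat destruct Rle_dec; lra. }
  rewrite E. field. lra.
Qed.

Lemma bond_val f n u v c (G : nat) (m : R) : (0 < G)%nat -> RowProp f n u v c ->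
  avg01 (fun l => f (m + l * INR G, n)) = c * (Qc u v (m + INR G) - Qc u v m) / INR G.
Proof.
  intros HG [Huv Hrow].
  assert (Hg : 0 < INR G) by (apply lt_0_INR; auto).
  set (g := INR G) in *.
  destruct (int_bump (fun l => f (m + l * g, n)) ((u - m)/g) ((v-m)/g) c) as [pr E].
  - unfold Rdiv. apply Rmult_le_compat_r; [left; apply Rinv_0_lt_compat; auto|lra].
  - intros x Hx1 Hx2. rewrite Hrow.
    + unfold bump. assert (Ex : x = (m + x * g - m) / g) by (field; lra).
      destruct (Rlt_dec u (m + x*g)); destruct (Rlt_dec ((u-m)/g) x);
      destruct (Rlt_dec (m + x*g) v); destruct (Rlt_dec x ((v-m)/g)); auto;
      exfalso.
      all: match goal with
      | H : ~ (?a < ?b) |- _ => apply H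
      end.
      all: try (apply Rmult_lt_reg_r with g; [lra|]; unfold Rdiv; rewrite Rmult_assoc, Rinv_l; lra).
      all: try (apply Rmult_lt_reg_r with (/g); [apply Rinv_0_lt_compat; lra|];
        replace (m + x * g) with (m + x*g) by auto;
        assert (x * g * / g = x) by (field; lra); unfold Rdiv in *; nra).
    + intro HH. apply Hx1. rewrite <- HH. field. lra.
    + intro HH. apply Hx2. rewrite <- HH. field. lra.
  - rewrite (avg01_val _ pr), E. apply bond_formula; auto.
Qed.

Lemma sumR_shift F k : sumR (fun j => F (S j)) k - sumR F k = F k - F O.
Proof. induction k; simpl; lra. Qed.

Lemma sumR_const x k : sumR (fun _ => x) k = INR k * x.
Proof. induction k; simpl sumR; [simpl; lra|]. rewrite IHk, S_INR. lra. Qed.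

Lemma Qc_lo u v s : u <= v -> s <= u -> Qc u v s = u.
Proof. intros. unfold Qc, Rmin, Rmax. repeat destruct Rle_dec; lra. Qed.
Lemma Qc_hi u v s : u <= v -> v <= s -> Qc u v s = v.
Proof. intros. unfold Qc, Rmin, Rmax. repeat destruct Rle_dec; lra. Qed.

Definition Wq u v (G : nat) (x : R) := sumR (fun j => Qc u v (x + INR j)) G.

Lemma row_sum f n u v c (G : nat) lo k : (0 < G)%nat -> RowProp f n u v c ->
  IZR lo + INR G <= u -> v <= IZR (lo + Z.of_nat k) ->
  sumZr (fun m => avg01 (fun l => f (IZR m + l * INR G, n))) lo k = c * (v - u).
Proof.
  intros HG HR H1 H2. pose proof (proj1 HR) as Huv.
  assert (Hg : 0 < INR G) by (apply lt_0_INR; auto).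
  rewrite (sumZr_tele _ (fun s => c * Wq u v G (IZR s) / INR G)).
  - unfold Wq.
    rewrite (sumR_ext _ (fun _ => v)), (sumR_ext (fun j => Qc u v (IZR lo + INR j)) (fun _ => u)).
    + rewrite !sumR_const. field. lra.
    + intros j Hj. apply Qc_lo; auto. apply lt_INR in Hj. lra.
    + intros j Hj. apply Qc_hi; auto. pose proof (pos_INR j). lra.
  - intros m. rewrite (bond_val f n u v c G) by auto.
    unfold Wq. rewrite plus_IZR.
    assert (E : sumR (fun j => Qc u v (IZR m + 1 + INR j)) G - sumR (fun j => Qc u v (IZR m + INR j)) G
                = Qc u v (IZR m + INR G) - Qc u v (IZR m)).
    { pose proof (sumR_shift (fun j => Qc u v (IZR m + INR j)) G) as SS. cbv beta in SS. replace (INR 0) with 0 in SS by reflexivity.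
      rewrite Rplus_0_r in SS. rewrite <- SS. f_equal. apply sumR_ext. intros j _.
      rewrite S_INR. f_equal. ring. }
    rewrite <- E. field. lra.
Qed.

Lemma bond_zero f n u v c (G : nat) m : (0 < G)%nat -> RowProp f n u v c ->
  (m + INR G <= u \/ v <= m) -> avg01 (fun l => f (m + l * INR G, n)) = 0.
Proof.
  intros HG HR H. rewrite (bond_val f n u v c G) by auto. pose proof (proj1 HR).
  assert (0 < INR G) by (apply lt_0_INR; auto).
  destruct H.
  - rewrite !Qc_lo by (auto; lra). field. lra.
  - rewrite !Qc_hi by (auto; lra). field. lra.
Qed.

Lemma clean_swap23 a b c : clean a c b = clean a b c.
Proof.
  unfold clean. destruct (decP (0 < a /\ 0 < c /\ 0 < b)) eqn:E1;
  destruct (decP (0 < a /\ 0 < b /\ 0 < c)) eqn:E2; unfold decP in *;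
  repeat destruct excluded_middle_informative; try discriminate; try tauto;
  try (exfalso; tauto); auto.
Qed.
Lemma clean_swap12 a b c : clean b a c = clean a b c.
Proof.
  unfold clean. unfold decP;
  repeat destruct excluded_middle_informative; try tauto; exfalso; tauto.
Qed.

Lemma Dt_swap23 A B C : Dt A C B = - Dt A B C.
Proof. dpt. ub. ring. Qed.
Lemma Dt_swap12 A B C : Dt B A C = - Dt A B C.
Proof. dpt. ub. ring. Qed.

Lemma Hf_swap23 A B C f : Dt A B C <> 0 -> Hf A B C f -> Hf A C B f.
Proof.
  intros HD H X H1 H2 H3. rewrite H by auto. rewrite <- clean_swap23. f_equal.
  - dpt. ub. field. split; auto. intro; apply HD. lra.
  - dpt. ub. field. split; auto. intro; apply HD. lra.
  - dpt. ub. field. split; auto. intro; apply HD. lra.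
Qed.

Lemma Hf_swap12 A B C f : Dt A B C <> 0 -> Hf A B C f -> Hf B A C f.
Proof.
  intros HD H X H1 H2 H3. rewrite H by auto. rewrite <- clean_swap12. f_equal.
  - dpt. ub. field. split; auto. intro; apply HD. lra.
  - dpt. ub. field. split; auto. intro; apply HD. lra.
  - dpt. ub. field. split; auto. intro; apply HD. lra.
Qed.

Definition bondf (f : pt -> R) (G : nat) (m n : Z) : R -> R :=
  fun l => f (IZR m + l * INR G, IZR n).

Definition CoreConcl (f : pt -> R) (G : nat) (Bd : Z) (DA : R) : Prop :=
  let lo := (- (Bd + Z.of_nat G))%Z in
  let k := Z.to_nat (2 * (Bd + Z.of_nat G) + 1) in
  (forall m n, inhabited (Riemann_integrable (bondf f G m n) 0 1)) /\
  (forall m n, ~ ((lo <= m < lo + Z.of_nat k)%Z /\ (lo <= n < lo + Z.of_nat k)%Z) ->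
     avg01 (bondf f G m n) = 0) /\
  sumZr (fun n => sumZr (fun m => avg01 (bondf f G m n)) lo k) lo k = DA / 2.

Lemma bond_int f n u v c (G : nat) (m : R) : (0 < G)%nat -> RowProp f n u v c ->
  inhabited (Riemann_integrable (fun l => f (m + l * INR G, n)) 0 1).
Proof.
  intros HG [Huv Hrow].
  assert (Hg : 0 < INR G) by (apply lt_0_INR; auto).
  set (g := INR G) in *.
  destruct (int_bump (fun l => f (m + l * g, n)) ((u - m)/g) ((v-m)/g) c) as [pr E].
  - unfold Rdiv. apply Rmult_le_compat_r; [left; apply Rinv_0_lt_compat; auto|lra].
  - intros x Hx1 Hx2. rewrite Hrow.
    + unfold bump. assert (Ex : x = (m + x * g - m) / g) by (field; lra).
      destruct (Rlt_dec u (m + x*g)); destruct (Rlt_dec ((u-m)/g) x);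
      destruct (Rlt_dec (m + x*g) v); destruct (Rlt_dec x ((v-m)/g)); auto;
      exfalso.
      all: match goal with
      | H : ~ (?a < ?b) |- _ => apply H
      end.
      all: try (apply Rmult_lt_reg_r with g; [lra|]; unfold Rdiv; rewrite Rmult_assoc, Rinv_l; lra).
      all: try (apply Rmult_lt_reg_r with (/g); [apply Rinv_0_lt_compat; lra|];
        replace (m + x * g) with (m + x*g) by auto;
        assert (x * g * / g = x) by (field; lra); unfold Rdiv in *; nra).
    + intro HH. apply Hx1. rewrite <- HH. field. lra.
    + intro HH. apply Hx2. rewrite <- HH. field. lra.
  - constructor; exact pr.
Qed.

Lemma bond_zero' f n u v c (G : nat) m : (0 < G)%nat -> RowProp f n u v c ->
  c * (v - u) = 0 -> avg01 (fun l => f (m + l * INR G, n)) = 0.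
Proof.
  intros HG HR H. rewrite (bond_val f n u v c G) by auto. pose proof (proj1 HR).
  assert (0 < INR G) by (apply lt_0_INR; auto).
  apply Rmult_integral in H. destruct H as [->|H].
  - field. lra.
  - assert (v = u) by lra. subst v. unfold Qc.
    replace (Rmin (Rmax (m + INR G) u) u) with u by (unfold Rmin, Rmax; repeat destruct Rle_dec; lra).
    replace (Rmin (Rmax m u) u) with u by (unfold Rmin, Rmax; repeat destruct Rle_dec; lra).
    field. lra.
Qed.

Lemma core_sorted (pa pb pc : Z * Z) (f : pt -> R) (G : nat) (Bd : Z) :
  let A := ptZ pa in let B := ptZ pb in let C := ptZ pc in
  Dt A B C <> 0 -> Hf A B C f -> (0 < G)%nat ->
  (snd pa <= snd pb)%Z -> (snd pb <= snd pc)%Z ->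
  (Z.abs (fst pa) <= Bd)%Z -> (Z.abs (fst pb) <= Bd)%Z -> (Z.abs (fst pc) <= Bd)%Z ->
  (Z.abs (snd pa) <= Bd)%Z -> (Z.abs (snd pb) <= Bd)%Z -> (Z.abs (snd pc) <= Bd)%Z ->
  CoreConcl f G Bd (Rabs (Dt A B C)).
Proof.
  intros A B C HD Hh HG H1 H2 B1 B2 B3 B4 B5 B6.
  destruct pa as [xa ya], pb as [xb yb], pc as [xc yc]. simpl in *.
  unfold A, B, C, ptZ in *; simpl in *.
  assert (Hbd : forall z, (Z.abs z <= Bd)%Z -> Rabs (IZR z) <= IZR Bd).
  { intros z Hz. rewrite <- abs_IZR. apply IZR_le. auto. }
  assert (Hrow : forall n : Z, exists u v c, RowProp f (IZR n) u v c /\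
     c*(v-u) = rowlen (IZR xa) (IZR ya) (IZR xb) (IZR yb) (IZR xc) (IZR yc) (IZR n) /\
     - IZR Bd <= u /\ v <= IZR Bd).
  { intros n. apply row_lemma; auto; apply IZR_le; auto. }
  assert (HaC : (ya < yc)%Z).
  { destruct (Z.eq_dec ya yc); [|lia]. subst. exfalso. apply HD.
    assert (yb = yc) by lia. subst. unfold Dt, det2, psub; simpl. ring. }
  assert (Hac : IZR ya < IZR yc) by (apply IZR_lt; auto).
  assert (HGz : INR G = IZR (Z.of_nat G)) by (rewrite <- INR_IZR_INZ; auto).
  unfold CoreConcl. cbv zeta. set (lo := (- (Bd + Z.of_nat G))%Z). set (k := Z.to_nat (2 * (Bd + Z.of_nat G) + 1)).
  fold A B C. assert (Hlo : lo = (- (Bd + Z.of_nat G))%Z) by reflexivity.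
  assert (Hk : Z.of_nat k = (2 * (Bd + Z.of_nat G) + 1)%Z) by (unfold k; rewrite Z2Nat.id; lia).
  clearbody lo k.
  split; [|split].
  - intros m n. destruct (Hrow n) as (u&v&c&HR&_). apply (bond_int f (IZR n) u v c G); auto.
  - intros m n Hmn. destruct (Hrow n) as (u&v&c&HR&HL&Hu&Hv).
    unfold bondf.
    destruct (Z_lt_le_dec n lo).
    { apply (bond_zero' f (IZR n) u v c G); auto. rewrite HL.
      unfold rowlen. destruct (Rlt_dec (IZR n) (IZR ya)) as [Hq|Hq]; auto.
      exfalso. apply Hq. apply IZR_lt. lia. }
    destruct (Z_lt_le_dec n (lo + Z.of_nat k)).
    2:{ apply (bond_zero' f (IZR n) u v c G); auto. rewrite HL.
      unfold rowlen. destruct (Rlt_dec (IZR n) (IZR ya)); auto.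
      destruct (Rlt_dec (IZR yc) (IZR n)) as [Hq|Hq]; auto.
      exfalso. apply Hq. apply IZR_lt. lia. }
    apply (bond_zero f (IZR n) u v c G); auto.
    destruct (Z_lt_le_dec m lo).
    + left. rewrite HGz, <- plus_IZR. apply Rle_trans with (- IZR Bd); auto.
      rewrite <- opp_IZR. apply IZR_le. lia.
    + right. destruct (Z_lt_le_dec m (lo + Z.of_nat k)); [lia|].
      apply Rle_trans with (IZR Bd); auto. apply IZR_le. lia.
  - unfold sumZr at 1.
    rewrite (sumR_ext _ (fun j => rowlen (IZR xa) (IZR ya) (IZR xb) (IZR yb) (IZR xc) (IZR yc)
                                   (IZR (lo + Z.of_nat j)))).
    + fold (sumZr (fun n => rowlen (IZR xa) (IZR ya) (IZR xb) (IZR yb) (IZR xc) (IZR yc) (IZR n)) lo k).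
      rewrite tent_sum; auto; lia.
    + intros j Hj. destruct (Hrow (lo + Z.of_nat j)%Z) as (u&v&c&HR&HL&Hu&Hv).
      rewrite <- HL. unfold bondf. apply (row_sum f _ u v c G); auto.
      * rewrite HGz, <- plus_IZR. apply Rle_trans with (- IZR Bd); auto.
        rewrite <- opp_IZR. apply IZR_le. lia.
      * apply Rle_trans with (IZR Bd); auto. apply IZR_le. lia.
Qed.

Lemma core_general (pa pb pc : Z * Z) (f : pt -> R) (G : nat) (Bd : Z) :
  let A := ptZ pa in let B := ptZ pb in let C := ptZ pc in
  Dt A B C <> 0 -> Hf A B C f -> (0 < G)%nat ->
  (Z.abs (fst pa) <= Bd)%Z -> (Z.abs (fst pb) <= Bd)%Z -> (Z.abs (fst pc) <= Bd)%Z ->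
  (Z.abs (snd pa) <= Bd)%Z -> (Z.abs (snd pb) <= Bd)%Z -> (Z.abs (snd pc) <= Bd)%Z ->
  CoreConcl f G Bd (Rabs (Dt A B C)).
Proof.
  intros A B C HD Hh HG B1 B2 B3 B4 B5 B6.
  assert (N12 : forall P Q R, Dt P Q R <> 0 -> Dt Q P R <> 0).
  { intros P Q R H. rewrite Dt_swap12. intro; apply H; lra. }
  assert (N23 : forall P Q R, Dt P Q R <> 0 -> Dt P R Q <> 0).
  { intros P Q R H. rewrite Dt_swap23. intro; apply H; lra. }
  assert (A12 : forall P Q R, Rabs (Dt Q P R) = Rabs (Dt P Q R)).
  { intros. rewrite Dt_swap12, Rabs_Ropp. auto. }
  assert (A23 : forall P Q R, Rabs (Dt P R Q) = Rabs (Dt P Q R)).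
  { intros. rewrite Dt_swap23, Rabs_Ropp. auto. }
  destruct (Z.le_gt_cases (snd pa) (snd pb)); destruct (Z.le_gt_cases (snd pb) (snd pc));
  destruct (Z.le_gt_cases (snd pa) (snd pc)).
  - apply core_sorted; auto.
  - lia.
  -
    rewrite <- A23. apply (core_sorted pa pc pb); auto; try lia.
    apply Hf_swap23; auto.
  -
    rewrite <- A23, <- A12. apply (core_sorted pc pa pb); auto; try lia.
    apply Hf_swap12; auto. apply Hf_swap23; auto.
  -
    rewrite <- A12. apply (core_sorted pb pa pc); auto; try lia.
    apply Hf_swap12; auto.
  -
    rewrite <- A12, <- A23. apply (core_sorted pb pc pa); auto; try lia.
    apply Hf_swap23; auto. apply Hf_swap12; auto.
  - lia.
  -
    rewrite <- A12, <- A23, <- A12. apply (core_sorted pc pb pa); auto; try lia.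
    apply Hf_swap12; auto. apply Hf_swap23; auto. apply Hf_swap12; auto.
Qed.

Lemma sum_list_app t l1 l2 : sum_list t (l1 ++ l2) = sum_list t l1 + sum_list t l2.
Proof. induction l1; simpl; lra. Qed.

Lemma sum_list_map {A} t (h : A -> Z * Z) l :
  sum_list t (map h l) = fold_right (fun x s => t (h x) + s) 0 l.
Proof. induction l; simpl; auto. rewrite IHl. auto. Qed.

Lemma sum_list_perm t l1 l2 : Permutation l1 l2 -> sum_list t l1 = sum_list t l2.
Proof. induction 1; simpl; lra. Qed.

Definition zlist (lo : Z) (k : nat) : list Z := map (fun j => (lo + Z.of_nat j)%Z) (seq 0 k).

Definition box (lo : Z) (k : nat) : list (Z * Z) :=
  flat_map (fun n => map (fun m => (m, n)) (zlist lo k)) (zlist lo k).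

Lemma fold_zlist (F : Z -> R) lo k :
  fold_right (fun x s => F x + s) 0 (zlist lo k) = sumZr F lo k.
Proof.
  unfold zlist, sumZr. induction k.
  - reflexivity.
  - rewrite seq_S, map_app, fold_right_app. simpl.
    rewrite <- IHk. clear IHk. generalize (F (lo + Z.of_nat k)%Z). intro x.
    induction (map (fun j : nat => (lo + Z.of_nat j)%Z) (seq 0 k)); simpl; lra.
Qed.

Lemma sum_flat t (L l0 : list Z) :
  sum_list t (flat_map (fun n => map (fun m => (m, n)) l0) L) =
  fold_right (fun n s => fold_right (fun m s => t (m, n) + s) 0 l0 + s) 0 L.
Proof.
  induction L as [|n l IH]; simpl; auto.
  rewrite sum_list_app, IH, sum_list_map. auto.
Qed.

Lemma sum_box t lo k :
  sum_list t (box lo k) = sumZr (fun n => sumZr (fun m => t (m, n)) lo k) lo k.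
Proof.
  unfold box. rewrite sum_flat, <- fold_zlist. f_equal. apply functional_extensionality.
  intros n. apply functional_extensionality. intros s. rewrite fold_zlist. auto.
Qed.

Lemma in_zlist lo k x : In x (zlist lo k) <-> (lo <= x < lo + Z.of_nat k)%Z.
Proof.
  unfold zlist. rewrite in_map_iff. split.
  - intros (j & <- & Hj). apply in_seq in Hj. lia.
  - intros H. exists (Z.to_nat (x - lo)). split; [lia|]. apply in_seq. lia.
Qed.

Lemma in_box lo k m n : In (m, n) (box lo k) <->
  ((lo <= m < lo + Z.of_nat k)%Z /\ (lo <= n < lo + Z.of_nat k)%Z).
Proof.
  unfold box. rewrite in_flat_map. split.
  - intros (n' & H1 & H2). apply in_map_iff in H2. destruct H2 as (m' & E & H3).
    inversion E; subst. rewrite in_zlist in *. auto.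
  - intros (H1 & H2). exists n. split; [apply in_zlist; auto|].
    apply in_map_iff. exists m. split; auto. apply in_zlist; auto.
Qed.

Lemma NoDup_zlist lo k : NoDup (zlist lo k).
Proof.
  unfold zlist. apply FinFun.Injective_map_NoDup; [|apply seq_NoDup].
  intros x y E. lia.
Qed.

Lemma NoDup_flat (L l0 : list Z) : NoDup L -> NoDup l0 ->
  NoDup (flat_map (fun n => map (fun m => (m, n)) l0) L).
Proof.
  intros HL1 H0. induction HL1 as [|n l Hn Hl IH]; simpl; [constructor|].
  apply NoDup_app; auto.
  - apply FinFun.Injective_map_NoDup; auto. intros x y E; inversion E; auto.
  - intros x H1 H2. apply in_map_iff in H1. destruct H1 as (m & <- & _).
    apply in_flat_map in H2. destruct H2 as (n' & Hn' & H2). apply in_map_iff in H2.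
    destruct H2 as (m' & E & _). inversion E; subst. auto.
Qed.

Lemma NoDup_box lo k : NoDup (box lo k).
Proof. apply NoDup_flat; apply NoDup_zlist. Qed.

Definition zz_dec : forall x y : Z * Z, {x = y} + {x <> y}.
Proof. decide equality; apply Z.eq_dec. Defined.

Lemma sum_support t F0 F : NoDup F0 -> NoDup F -> incl F0 F ->
  (forall x, ~ In x F0 -> t x = 0) -> sum_list t F = sum_list t F0.
Proof.
  intros N0 N I Z0.
  assert (Hs : forall l, sum_list t l = sum_list t (filter (fun x => if in_dec zz_dec x F0 then true else false) l)).
  { induction l; simpl; auto. destruct (in_dec zz_dec a F0); simpl; rewrite IHl; auto.
    rewrite Z0 by auto. lra. }
  rewrite Hs. apply sum_list_perm. apply NoDup_Permutation.
  - apply NoDup_filter; auto.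
  - auto.
  - intros x. rewrite filter_In. split.
    + intros (_ & H). destruct (in_dec zz_dec x F0); auto; discriminate.
    + intros H. split; auto. destruct (in_dec zz_dec x F0); auto.
Qed.

Lemma unimod (p q : Z) : (p, q) <> (0%Z, 0%Z) ->
  exists g u v p' q', (0 < g)%Z /\ p = (g * p')%Z /\ q = (g * q')%Z /\ (u * p' + v * q' = 1)%Z.
Proof.
  intros Hpq. set (g := Z.gcd p q).
  assert (Hg : (0 < g)%Z).
  { pose proof (Z.gcd_nonneg p q). destruct (Z.eq_dec g 0).
    - apply Z.gcd_eq_0 in e. destruct e; subst; tauto.
    - unfold g in *; lia. }
  destruct (Z.gcd_divide_l p q) as [p' Hp]. destruct (Z.gcd_divide_r p q) as [q' Hq].
  destruct (Zis_gcd_bezout p q g (Zgcd_is_gcd p q)) as [u v Huv].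
  exists g, u, v, p', q'. fold g in Hp, Hq. split; [auto|]. split; [lia|]. split; [lia|].
  rewrite Hp, Hq in Huv.
  assert (g * (u * p' + v * q') = g * 1)%Z by lia.
  apply Z.mul_cancel_l in H; lia.
Qed.

Definition Lin (al be ga de : R) (X : pt) : pt := (al * fst X + be * snd X, ga * fst X + de * snd X).

Lemma det_lin al be ga de P Q R S :
  det2 (psub (Lin al be ga de P) (Lin al be ga de Q)) (psub (Lin al be ga de R) (Lin al be ga de S)) =
  (al * de - be * ga) * det2 (psub P Q) (psub R S).
Proof. unfold det2, psub, Lin; simpl. ring. Qed.

Lemma lin_inv al be ga de A B C X : al * de - be * ga = 1 ->
  Dt (Lin al be ga de A) (Lin al be ga de B) (Lin al be ga de C) = Dt A B C /\
  bary_a (Lin al be ga de A) (Lin al be ga de B) (Lin al be ga de C) (Lin al be ga de X) = bary_a A B C X /\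
  bary_b (Lin al be ga de A) (Lin al be ga de B) (Lin al be ga de C) (Lin al be ga de X) = bary_b A B C X /\
  bary_c (Lin al be ga de A) (Lin al be ga de B) (Lin al be ga de C) (Lin al be ga de X) = bary_c A B C X.
Proof.
  intros Hd. unfold Dt, bary_a, bary_b, bary_c. rewrite !det_lin, Hd, !Rmult_1_l. auto.
Qed.

Lemma sum_list_map2 t (h : Z * Z -> Z * Z) l : sum_list t (map h l) = sum_list (fun x => t (h x)) l.
Proof. induction l; simpl; auto. rewrite IHl; auto. Qed.

Theorem lemma4p4 (a b c : Z * Z) (r : Z * Z) :
  nondegenerate (ptZ a) (ptZ b) (ptZ c) ->
  r <> (0%Z, 0%Z) ->
  (forall i : Z * Z,
     inhabited (Riemann_integrable
       (bond_param (ptZ i) (ptZ (fst i + fst r, snd i + snd r)%Z)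
          (chi_tri (ptZ a) (ptZ b) (ptZ c))) 0 1)) /\
  sumZ2 (fun i => bond_avg (chi_tri (ptZ a) (ptZ b) (ptZ c))
                    (ptZ i) (ptZ (fst i + fst r, snd i + snd r)%Z))
        (tri_area (ptZ a) (ptZ b) (ptZ c)).
Proof.
  intros Hnd Hr.
  destruct r as [r1 r2].
  destruct (unimod r1 r2 Hr) as (g & u & v & p' & q' & Hg & Ep & Eq & Hdet).
  simpl.
  set (Mz := fun i : Z * Z => ((u * fst i + v * snd i)%Z, (- q' * fst i + p' * snd i)%Z)).
  set (Miz := fun j : Z * Z => ((p' * fst j - v * snd j)%Z, (q' * fst j + u * snd j)%Z)).
  set (MiR := Lin (IZR p') (- IZR v) (IZR q') (IZR u)).
  set (MR := Lin (IZR u) (IZR v) (- IZR q') (IZR p')).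
  assert (HdR : IZR u * IZR p' + IZR v * IZR q' = 1).
  { rewrite <- !mult_IZR, <- plus_IZR, Hdet. auto. }
  assert (F1 : forall i, Miz (Mz i) = i).
  { intros [x y]. unfold Miz, Mz; simpl. f_equal.
    - transitivity ((u * p' + v * q') * x)%Z; [ring|rewrite Hdet; ring].
    - transitivity ((u * p' + v * q') * y)%Z; [ring|rewrite Hdet; ring]. }
  assert (F2 : forall j, Mz (Miz j) = j).
  { intros [x y]. unfold Miz, Mz; simpl. f_equal.
    - transitivity ((u * p' + v * q') * x)%Z; [ring|rewrite Hdet; ring].
    - transitivity ((u * p' + v * q') * y)%Z; [ring|rewrite Hdet; ring]. }
  assert (F3 : forall j, MiR (ptZ j) = ptZ (Miz j)).
  { intros [x y]. unfold MiR, Miz, Lin, ptZ; simpl.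
    rewrite minus_IZR, plus_IZR, !mult_IZR. f_equal; ring. }
  assert (F4 : forall X, MR (MiR X) = X).
  { intros [x y]. unfold MR, MiR, Lin; simpl. f_equal.
    - transitivity ((IZR u * IZR p' + IZR v * IZR q') * x); [ring|rewrite HdR; ring].
    - transitivity ((IZR u * IZR p' + IZR v * IZR q') * y); [ring|rewrite HdR; ring]. }
  assert (HdetM : IZR p' * IZR u - - IZR v * IZR q' = 1) by lra.
  set (chi := chi_tri (ptZ a) (ptZ b) (ptZ c)).
  set (f := fun X => chi (MiR X)).
  set (pa := Mz a). set (pb := Mz b). set (pc := Mz c).
  assert (EA : ptZ a = MiR (ptZ pa)) by (unfold pa; rewrite F3, F1; auto).
  assert (EB : ptZ b = MiR (ptZ pb)) by (unfold pb; rewrite F3, F1; auto).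
  assert (EC : ptZ c = MiR (ptZ pc)) by (unfold pc; rewrite F3, F1; auto).
  assert (HD : Dt (ptZ pa) (ptZ pb) (ptZ pc) = Dt (ptZ a) (ptZ b) (ptZ c)).
  { rewrite EA, EB, EC. symmetry. apply (lin_inv _ _ _ _ _ _ _ (0,0) HdetM). }
  assert (HD0 : Dt (ptZ pa) (ptZ pb) (ptZ pc) <> 0) by (rewrite HD; exact Hnd).
  assert (Hh : Hf (ptZ pa) (ptZ pb) (ptZ pc) f).
  { intros X H1 H2 H3. unfold f, chi.
    assert (inj : forall Y, MiR X = MiR Y -> X = Y).
    { intros Y E. rewrite <- (F4 X), <- (F4 Y), E. auto. }
    rewrite chi_else.
    - rewrite EA, EB, EC. destruct (lin_inv _ _ _ _ (ptZ pa) (ptZ pb) (ptZ pc) X HdetM) as (_&E1&E2&E3).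
      unfold MiR. rewrite E1, E2, E3. auto.
    - rewrite EA. intro E; apply H1; apply inj; auto.
    - rewrite EB. intro E; apply H2; apply inj; auto.
    - rewrite EC. intro E; apply H3; apply inj; auto. }
  set (G := Z.to_nat g).
  assert (HG : (0 < G)%nat) by (unfold G; lia).
  assert (HGz : Z.of_nat G = g) by (unfold G; lia).
  assert (HGR : INR G = IZR g) by (rewrite INR_IZR_INZ, HGz; auto).
  set (Bd := (Z.abs (fst pa) + Z.abs (snd pa) + Z.abs (fst pb) + Z.abs (snd pb)
             + Z.abs (fst pc) + Z.abs (snd pc))%Z).
  destruct (core_general pa pb pc f G Bd HD0 Hh HG) as (C1 & C2 & C3); try (unfold Bd; lia).
  assert (Hbond : forall i : Z * Z,
    bond_param (ptZ i) (ptZ (fst i + r1, snd i + r2)%Z) chi = bondf f G (fst (Mz i)) (snd (Mz i))).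
  { intros [x y]. apply functional_extensionality. intros l.
    unfold bond_param, bondf, f. simpl. f_equal. unfold MiR, Lin, Mz; simpl. rewrite HGR.
    rewrite Ep, Eq. rewrite !plus_IZR, !mult_IZR, !opp_IZR. f_equal.
    - apply Rminus_diag_uniq.
      transitivity ((1 - (IZR u * IZR p' + IZR v * IZR q')) * IZR x); [ring|rewrite HdR; ring].
    - apply Rminus_diag_uniq.
      transitivity ((1 - (IZR u * IZR p' + IZR v * IZR q')) * IZR y); [ring|rewrite HdR; ring]. }
  split.
  - intros i. rewrite Hbond. apply C1.
  - set (lo := (- (Bd + Z.of_nat G))%Z) in *.
    set (k := Z.to_nat (2 * (Bd + Z.of_nat G) + 1)) in *.
    intros eps Heps. exists (map Miz (box lo k)).
    intros F HN Hincl.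
    set (t := fun i : Z * Z => bond_avg chi (ptZ i) (ptZ (fst i + r1, snd i + r2)%Z)).
    assert (Ht : forall i, t i = avg01 (bondf f G (fst (Mz i)) (snd (Mz i)))).
    { intros i. unfold t. rewrite <- Hbond. reflexivity. }
    rewrite (sum_support t (map Miz (box lo k)) F); auto.
    + rewrite sum_list_map2.
      rewrite sum_box.
      assert (E : (fun n => sumZr (fun m => t (Miz (m, n))) lo k) =
                  (fun n => sumZr (fun m => avg01 (bondf f G m n)) lo k)).
      { apply functional_extensionality; intro n; f_equal; apply functional_extensionality;
        intro m; rewrite Ht, F2; auto. }
      rewrite E, C3, HD. unfold tri_area, Dt. rewrite Rminus_diag, Rabs_R0. lra.
    + apply FinFun.Injective_map_NoDup; [|apply NoDup_box].
      intros x y E. rewrite <- (F2 x), <- (F2 y), E. auto.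
    + intros i Hi. rewrite Ht. apply C2. intros Hin.
      apply Hi. apply in_map_iff. exists (Mz i). split; auto.
      destruct (Mz i) as [m n] eqn:Em. apply in_box. auto.
Qed.
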